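(* Let $p\neq 3$ be a prime and let $C(x_1,\ldots,x_r)=a_1x_1^3+a_2x_2^3+\cdots+a_rx_r^3$ with $a_1,\ldots,a_r$ integers. Suppose there are indices $1\leq i<j<k\leq r$ with $a_ia_ja_k\neq 0$ and $\nu_p(a_i)\equiv\nu_p(a_j)\equiv\nu_p(a_k)\pmod 3$. Then $R(C)$ is dense in $\mathbb{Q}_p$.
   Context: For an integral form $F$ in $r$ variables, $R(F)=\{F(\overline{x})/F(\overline{y}):\overline{x},\overline{y}\in\mathbb{Z}^r,\ F(\overline{y})\neq 0\}$, viewed as a subset of the field $\mathbb{Q}_p$ of $p$-adic numbers with its $p$-adic topology. $\nu_p$ denotes the $p$-adic valuation. *)

(* Defs.v *)
From mathcomp Require Import all_boot all_order all_algebra.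
Set Implicit Arguments. Unset Strict Implicit. Unset Printing Implicit Defensive.
Import Order.TTheory GRing.Theory Num.Theory.
Local Open Scope ring_scope.

(* p-adic valuation of an integer (meaningful for a <> 0). *)
Definition nu_int (p : nat) (a : int) : nat := logn p `|a|%N.

Definition nu_rat (p : nat) (q : rat) : int :=
  (logn p `|numq q|%N)%:Z - (logn p `|denq q|%N)%:Z.

Definition diag_cubic (r : nat) (a : 'I_r -> int) (x : 'I_r -> int) : int :=
  \sum_(i < r) a i * x i ^+ 3.

Definition ratio_set (r : nat) (F : ('I_r -> int) -> int) (z : rat) : Prop :=
  exists x y : 'I_r -> int, F y != 0 /\ z = (F x)%:~R / (F y)%:~R.

(* Since Q is dense
   in Q_p, this holds iff every rational q is a p-adic limit of points of S:
   for every q and every n there is s in S with |s - q|_p <= p^(-n). *)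
Definition padic_dense (p : nat) (S : rat -> Prop) : Prop :=
  forall (q : rat) (n : nat), exists s : rat,
    S s /\ (s = q \/ (n%:Z <= nu_rat p (s - q))%R).

(* Main.v *)
Require Import Defs.
From mathcomp Require Import all_boot all_order all_algebra.
From mathcomp Require Import all_field all_solvable.
From mathcomp Require Import zify ring.
Set Implicit Arguments. Unset Strict Implicit. Unset Printing Implicit Defensive.
Import Order.TTheory GRing.Theory Num.Theory.
Local Open Scope ring_scope.


Section FF.
Variable F : finFieldType.
Let n := #|F|.-1.

Lemma n_gt0 : (0 < n)%N.
Proof. by rewrite /n -ltnS prednK ?finNzRing_gt1 // ltnW // finNzRing_gt1. Qed.

Lemma expf_n (x : F) : x != 0 -> x ^+ n = 1.
Proof.
move=> nz; have := expf_card x.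
rewrite -(prednK (ltnW (finNzRing_gt1 F))) exprS -/n => /eqP.
move=> H; apply: (mulfI nz); rewrite mulr1.
exact: (eqP H).
Qed.

Lemma gen_exists : exists g : F, g ^+ n = 1 /\ forall t, t != 0 -> exists m, (m < n)%N /\ t = g ^+ m.
Proof.
pose rs := [seq x <- enum F | x != 0].
have hs : size rs = n.
  rewrite /rs /n -(cardC1 0) cardE /enum_mem /enum_mem.
  congr size.
  rewrite filter_predT; apply: eq_filter => x; by rewrite !inE.
have : has n.-primitive_root rs.
  apply: has_prim_root; first exact: n_gt0.
  - apply/allP => x; rewrite mem_filter => /andP[nz _]; rewrite unity_rootE expf_n //.
  - by rewrite filter_uniq // enum_uniq.
  - by rewrite hs.
case/hasP => g _ pg; exists g; split; first exact: prim_expr_order pg.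
move=> t nz; have [i ->] := prim_rootP pg (expf_n nz); by exists i.
Qed.
End FF.

Section Cubes.
Variable F : finFieldType.
Let n := #|F|.-1.
Definition cubeb (t : F) := [exists s, t == s ^+ 3].

Lemma cubeP t : reflect (exists s, t = s ^+ 3) (cubeb t).
Proof.
apply: (iffP existsP) => [[s /eqP->]|[s ->]]; by exists s.
Qed.

Lemma cubeX s : cubeb (s ^+ 3). Proof. by apply/cubeP; exists s. Qed.

Lemma cubeM u v : cubeb u -> cubeb v -> cubeb (u * v).
Proof. by move=> /cubeP[s ->] /cubeP[w ->]; rewrite -exprMn cubeX. Qed.

Lemma cubeV u : cubeb u -> cubeb u^-1.
Proof. by move=> /cubeP[s ->]; rewrite -exprVn cubeX. Qed.

Lemma cubeN1 : cubeb (-1 : F).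
Proof. by apply/cubeP; exists (-1); rewrite -signr_odd. Qed.

Lemma cube_exp (g : F) m : (3 %| m)%N -> cubeb (g ^+ m).
Proof. by move=> /dvdnP[k ->]; rewrite exprM cubeX. Qed.

Lemma noncube_exp (g : F) m : g ^+ n = 1 -> ~~ cubeb (g ^+ m) ->
  (3 %| n)%N /\ ~~ (3 %| m)%N.
Proof.
move=> gn nc; have h3m : ~~ (3 %| m)%N.
  by apply: contra nc; apply: cube_exp.
split=> //; apply/negPn/negP => h3n; move: nc; apply/negP/negPn.
have [t [ht1 ht2]] : exists t, (t < 3)%N /\ (3 %| m + t * n)%N.
  have : (3 %| m)%N || (3 %| m + n)%N || (3 %| m + 2 * n)%N.
    move: h3n h3m; rewrite /dvdn; lia.
  case/orP => [/orP[]|] h; [exists 0%N|exists 1%N|exists 2%N]; rewrite ?mul1n ?addn0 //.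
have : g ^+ (m + t * n) = g ^+ m by rewrite exprD mulnC exprM gn expr1n mulr1.
by move=> <-; apply: cube_exp.
Qed.

Lemma expV_gen (g : F) i : g ^+ n = 1 -> (i <= n)%N -> (g ^+ i)^-1 = g ^+ (n - i).
Proof.
move=> gn lin; have nz : g ^+ i != 0.
  apply/negP => /eqP h; move: gn; rewrite -(subnKC lin) exprD h mul0r => /eqP.
  by rewrite eq_sym oner_eq0.
apply: (mulfI nz); rewrite mulfV // -exprD subnKC //.
Qed.

Lemma covering (a c t : F) : a != 0 -> c != 0 -> t != 0 ->
  ~~ cubeb a -> ~~ cubeb c -> ~~ cubeb (c / a) -> ~~ cubeb t -> ~~ cubeb (t / a) ->
  cubeb (t / c).
Proof.
move=> a0 c0 t0 na nc nca nt nta.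
have [g [gn gen]] := gen_exists F.
have [i [ilt ea]] := gen a a0.
have [j [jlt ec]] := gen c c0.
have [l [llt et]] := gen t t0.
move: nc nca nt nta na; rewrite ea ec et.
rewrite (expV_gen gn (ltnW ilt)) (expV_gen gn (ltnW jlt)) -!exprD => nc nca nt nta na.
have [h3n h1] := noncube_exp gn na.
have [_ h2] := noncube_exp gn nc.
have [_ h3] := noncube_exp gn nca.
have [_ h4] := noncube_exp gn nt.
have [_ h5] := noncube_exp gn nta.
apply: cube_exp; move: h1 h2 h3 h4 h5 h3n ilt jlt llt; rewrite /dvdn /n.
move: #|F|.-1 => N; clear; lia.
Qed.
End Cubes.

Section Main.
Variable F : finFieldType.

Lemma cube_div u v : cubeb u -> cubeb v -> @cubeb F (u / v).
Proof. by move=> hu hv; apply: cubeM => //; apply: cubeV. Qed.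

Lemma main_sol (a c : F) : a != 0 -> c != 0 -> ~~ cubeb a -> ~~ cubeb c ->
  ~~ cubeb (c / a) -> exists s w, 1 + a * s ^+ 3 = c * w ^+ 3.
Proof.
move=> a0 c0 na nc nca.
case: (boolP [exists s, exists w, 1 + a * s ^+ 3 == c * w ^+ 3]).
  by case/existsP => s /existsP[w /eqP h]; exists s, w.
move=> H; exfalso.
pose K := [set t : F | (t != 0) && cubeb t].
pose aK := [set t : F | (t != 0) && cubeb (t / a)].
have noH u : u != 0 -> cubeb (u / a) -> cubeb ((1 + u) / c) -> False.
  move=> u0 /cubeP[s hs] /cubeP[w hw]; move/negP: H; apply; apply/existsP; exists s.
  apply/existsP; exists w; apply/eqP.
  by rewrite -hs -hw mulrC divfK // mulrC divfK.
have cubea_of u : u != 0 -> cubeb u -> cubeb (u / a) -> False.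
  move=> u0 hu hua; move/negP: na; apply.
  have -> : a = u / (u / a) by rewrite invf_div mulrC divfK.
  exact: cube_div.
have K1 : (-1 : F) \in K by rewrite inE oppr_eq0 oner_eq0 cubeN1.
have le1 : (#|K| <= #|aK|)%N.
  rewrite -(card_imset K (mulfI a0)); apply: subset_leq_card.
  apply/subsetP => x /imsetP[t]; rewrite inE => /andP[t0 ht] ->.
  by rewrite inE mulf_neq0 // [a * t]mulrC mulfK.
pose phi (u : F) : F := if cubeb (1 + u) then - (1 + u) else - (1 + u^-1).
have u1 u : u \in aK -> 1 + u != 0.
  rewrite inE => /andP[u0 hu]; apply/negP => /eqP h.
  have eu : u = -1 by rewrite -[u](addKr 1) h addr0.
  by apply: (cubea_of u u0) => //; rewrite eu cubeN1.
have in2 u : u \in aK -> ~~ cubeb (1 + u) -> cubeb ((1 + u) / a).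
  move=> hu n1u; have := hu; rewrite inE => /andP[u0 hua].
  case: (boolP (cubeb ((1 + u) / a))) => // n2.
  exfalso; apply: (noH u u0 hua).
  apply: (covering a0 c0 (u1 u hu)) => //.
have sub : phi @: aK \subset K :\ -1.
  apply/subsetP => x /imsetP[u hu ->]; have := hu; rewrite inE => /andP[u0 hua].
  rewrite /phi; case: ifP => hc.
    have h1 : 1 + u != 1 by rewrite -subr_eq0 addrAC subrr add0r.
    rewrite !inE eqr_opp oppr_eq0 u1 // h1 /=.
    by rewrite -mulN1r; apply: cubeM; rewrite ?cubeN1.
  have e : 1 + u^-1 = (1 + u) / u by rewrite mulrDl divff // mul1r addrC.
  have h1 : 1 + u^-1 != 1 by rewrite -subr_eq0 addrAC subrr add0r invr_eq0.
  rewrite !inE eqr_opp h1 e oppr_eq0 mulf_neq0 ?invr_eq0 ?u1 //=.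
  rewrite -mulN1r; apply: cubeM; first exact: cubeN1.
  have -> : (1 + u) / u = ((1 + u) / a) / (u / a).
    by rewrite invf_div mulrA divfK.
  by apply: cube_div => //; apply: in2 => //; rewrite hc.
have inj : {in aK &, injective phi}.
  move=> u v hu hv; have := hu; rewrite inE => /andP[u0 hua].
  have := hv; rewrite inE => /andP[v0 hva].
  have mixed x y : x \in aK -> y \in aK -> 1 + x = 1 + y^-1 -> False.
    rewrite !inE => /andP[x0 hx] /andP[y0 hy] /addrI exy.
    have ca2 : cubeb (a ^+ 2).
      have -> : a ^+ 2 = ((x / a) * (y / a))^-1.
        by rewrite exy; field; rewrite a0 y0 oner_eq0.
      by apply: cubeV; apply: cubeM.
    move/negP: na; apply.
    have -> : a = a ^+ 3 / a ^+ 2 by field.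
    by apply: cube_div => //; apply: cubeX.
  rewrite /phi; case: ifP => hcu; case: ifP => hcv /eqP; rewrite eqr_opp => /eqP.
  - by move/addrI.
  - by move/(mixed u v hu hv).
  - by move/esym/(mixed v u hv hu).
  - by move/addrI/invr_inj.
have ecard := card_in_imset inj.
have := subset_leq_card sub; rewrite ecard.
have := cardsD1 (-1 : F) K; rewrite K1 /=.
move: le1 => h1 h2 h3; have := leq_trans h1 h3; by rewrite {1}h2 add1n ltnn.
Qed.
End Main.

Lemma cube_zero (F : finFieldType) (al be ga : F) : al != 0 -> be != 0 -> ga != 0 ->
  exists x y z : F, [|| x != 0, y != 0 | z != 0] /\
    al * x ^+ 3 + be * y ^+ 3 + ga * z ^+ 3 = 0.
Proof.
move=> a0 b0 g0.
pose a := be / al; pose c := - ga / al.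
have an0 : a != 0 by rewrite mulf_neq0 ?invr_eq0.
have cn0 : c != 0 by rewrite mulf_neq0 ?invr_eq0 ?oppr_eq0.
case: (boolP (cubeb a)) => [/cubeP[t ht]|na].
  exists (- t), 1, 0; split; first by rewrite oner_eq0 orbT.
  rewrite expr0n /= mulr0 addr0 expr1n mulr1 exprNn -signr_odd /= mulN1r -ht /a.
  by rewrite mulrN mulrC divfK // addNr.
case: (boolP (cubeb c)) => [/cubeP[t ht]|nc].
  exists t, 0, 1; split; first by rewrite oner_eq0 !orbT.
  rewrite expr0n /= mulr0 addr0 expr1n mulr1 -ht /c.
  by rewrite mulrC divfK // addNr.
case: (boolP (cubeb (c / a))) => [/cubeP[t ht]|nca].
  exists 0, t, 1; split; first by rewrite oner_eq0 !orbT.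
  rewrite expr0n /= mulr0 add0r expr1n mulr1.
  have -> : t ^+ 3 = c / a by [].
  by rewrite /c /a; field; rewrite a0 b0.
have [s [w e]] := main_sol an0 cn0 na nc nca.
exists 1, s, w; split; first by rewrite oner_eq0.
move: e; rewrite /a /c => e.
have : al * (1 + be / al * s ^+ 3 - - ga / al * w ^+ 3) = 0 by rewrite e subrr mulr0.
by rewrite expr1n mulr1 => <-; field.
Qed.


Section Ints.
Variable p : nat.
Hypothesis pr : prime p.
Hypothesis p3 : p != 3%N.

Lemma ndvd_mul (m n : int) : ~~ (p %| m)%Z -> ~~ (p %| n)%Z -> ~~ (p %| m * n)%Z.
Proof. by rewrite !dvdzE abszM Euclid_dvdM // negb_or => -> ->. Qed.

Lemma ndvd3 : ~~ (p %| 3)%Z.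
Proof. by rewrite dvdzE /= dvdn_prime2 //. Qed.

Lemma hensel (b R x0 : int) : ~~ (p %| b)%Z -> ~~ (p %| x0)%Z ->
  (p %| b * x0 ^+ 3 + R)%Z ->
  forall N, exists x, ~~ (p %| x)%Z /\ ((p%:Z) ^+ N.+1 %| b * x ^+ 3 + R)%Z.
Proof.
move=> pb px0 h0; elim=> [|N [x [px hx]]]; first by exists x0; rewrite expr1.
have cop : coprimez (3 * b * x ^+ 2) p.
  rewrite coprimez_sym coprimezE prime_coprime //.
  by apply: (ndvd_mul (ndvd_mul ndvd3 pb)); rewrite expr2; apply: ndvd_mul.
have [[u v] /= huv] := coprimezP _ _ cop.
have [m hm] := dvdzP hx.
have eQ1 : (p%:Z) ^+ N.+1 = (p%:Z) ^+ N * p by rewrite exprSr.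
have eQ2 : (p%:Z) ^+ N.+2 = (p%:Z) ^+ N * p * p by rewrite exprSr eQ1.
rewrite eQ1 in hm; rewrite eQ2.
move: ((p%:Z) ^+ N) hm => Q hm.
pose h := m * u * Q * p.
exists (x - h); split.
  apply: contra px => hxh.
  have -> : x = (x - h) + h by rewrite subrK.
  by apply: rpredD => //; apply: dvdz_mull; apply: dvdzz.
have eR : R = m * (Q * p) - b * x ^+ 3 by rewrite -hm; ring.
have e1 : b * (x - h) ^+ 3 + R =
   Q * p * (m * (1 - u * (3 * b * x ^+ 2))) +
   Q * p * p * (Q * m ^+ 2 * u ^+ 2 * (3 * b * x - b * h)).
  by rewrite eR /h; ring.
have e2 : 1 - u * (3 * b * x ^+ 2) = v * p.
  by rewrite -{1}huv addrAC subrr add0r.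
rewrite e1 e2.
apply: rpredD; last by apply: dvdz_mulr; apply: dvdzz.
have -> : Q * p * (m * (v * p)) = Q * p * p * (m * v) by ring.
by apply: dvdz_mulr; apply: dvdzz.
Qed.

Lemma approx3 (b1 b2 b3 x0 y0 z0 T : int) N :
  ~~ (p %| b1)%Z -> ~~ (p %| x0)%Z ->
  (p %| b1 * x0 ^+ 3 + b2 * y0 ^+ 3 + b3 * z0 ^+ 3)%Z -> (p %| T)%Z ->
  exists x y z, ((p%:Z) ^+ N.+1 %| b1 * x ^+ 3 + b2 * y ^+ 3 + b3 * z ^+ 3 - T)%Z.
Proof.
move=> pb1 px0 h hT.
have h' : (p %| b1 * x0 ^+ 3 + (b2 * y0 ^+ 3 + b3 * z0 ^+ 3 - T))%Z.
  by rewrite !addrA; apply: rpredB.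
have [x [_ hx]] := hensel pb1 px0 h' N.
by exists x, y0, z0; rewrite !addrA in hx.
Qed.

Lemma approx3_gen (b1 b2 b3 x0 y0 z0 T : int) N :
  ~~ (p %| b1)%Z -> ~~ (p %| b2)%Z -> ~~ (p %| b3)%Z ->
  [|| ~~ (p %| x0)%Z, ~~ (p %| y0)%Z | ~~ (p %| z0)%Z] ->
  (p %| b1 * x0 ^+ 3 + b2 * y0 ^+ 3 + b3 * z0 ^+ 3)%Z -> (p %| T)%Z ->
  exists x y z, ((p%:Z) ^+ N.+1 %| b1 * x ^+ 3 + b2 * y ^+ 3 + b3 * z ^+ 3 - T)%Z.
Proof.
move=> pb1 pb2 pb3 /or3P[px|py|pz] h hT.
- exact: approx3 pb1 px h hT.
- have h' : (p %| b2 * y0 ^+ 3 + b1 * x0 ^+ 3 + b3 * z0 ^+ 3)%Z.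
    by move: h; rewrite (addrC (b1 * _)).
  have [y [x [z hh]]] := approx3 N pb2 py h' hT.
  by exists x, y, z; rewrite (addrC (b1 * _)).
- have h' : (p %| b3 * z0 ^+ 3 + b2 * y0 ^+ 3 + b1 * x0 ^+ 3)%Z.
    by have -> : b3 * z0 ^+ 3 + b2 * y0 ^+ 3 + b1 * x0 ^+ 3 = b1 * x0 ^+ 3 + b2 * y0 ^+ 3 + b3 * z0 ^+ 3 by ring.
  have [z [y [x hh]]] := approx3 N pb3 pz h' hT.
  exists x, y, z.
  by have <- : b3 * z ^+ 3 + b2 * y ^+ 3 + b1 * x ^+ 3 = b1 * x ^+ 3 + b2 * y ^+ 3 + b3 * z ^+ 3 by ring.
Qed.

Lemma Fp_int0 (z : int) : ((z%:~R : 'F_p) == 0) = (p %| z)%Z.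
Proof.
rewrite dvdzE /=; case: z => m.
  by rewrite /= -(dvdn_pcharf (pchar_Fp pr)).
by rewrite NegzE rmorphN /= oppr_eq0 -(dvdn_pcharf (pchar_Fp pr)).
Qed.

Lemma Fp_rep (x : 'F_p) : ((nat_of_ord x)%:Z%:~R : 'F_p) = x.
Proof. by rewrite -pmulrn natr_Zp. Qed.

End Ints.


Lemma intr_cubeterm (R : pzRingType) (b x : int) :
  (b * x ^+ 3)%:~R = b%:~R * (x%:~R) ^+ 3 :> R.
Proof. by rewrite intrM; congr (_ * _); apply: (rmorphXn intr). Qed.

Lemma int_zero (p : nat) (pr : prime p) (b1 b2 b3 : int) :
  ~~ (p %| b1)%Z -> ~~ (p %| b2)%Z -> ~~ (p %| b3)%Z ->
  exists x0 y0 z0 : int, [|| ~~ (p %| x0)%Z, ~~ (p %| y0)%Z | ~~ (p %| z0)%Z] /\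
  (p %| b1 * x0 ^+ 3 + b2 * y0 ^+ 3 + b3 * z0 ^+ 3)%Z.
Proof.
move=> h1 h2 h3.
have [x [y [z [nz e]]]] := @cube_zero 'F_p (b1%:~R) (b2%:~R) (b3%:~R)
  ltac:(by rewrite Fp_int0) ltac:(by rewrite Fp_int0) ltac:(by rewrite Fp_int0).
exists (nat_of_ord x)%:Z, (nat_of_ord y)%:Z, (nat_of_ord z)%:Z.
rewrite -!(Fp_int0 pr) !intrD !intr_cubeterm !Fp_rep e eqxx; split=> //.
Qed.


Lemma nu_rat_frac (p : nat) (U W : int) : U != 0 -> W != 0 ->
  nu_rat p (U%:~R / W%:~R) = (logn p `|U|)%:Z - (logn p `|W|)%:Z.
Proof.
move=> U0 W0; rewrite /nu_rat; set q : rat := _ / _.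
have q0 : q != 0 by rewrite mulf_neq0 ?invr_eq0 ?intr_eq0.
have e : numq q * W = U * denq q.
  apply: (@intr_inj rat); rewrite !intrM numqE /q.
  by field; rewrite intr_eq0.
have := congr1 (fun z : int => logn p `|z|%N) e => /=.
rewrite !abszM !lognM ?absz_gt0 ?numq_eq0 ?denq_neq0 //.
lia.
Qed.

Lemma unit_part (p : nat) (pr : prime p) (a : int) : a != 0 ->
  exists b : int, ~~ (p %| b)%Z /\ a = b * (p%:Z) ^+ (nu_int p a).
Proof.
move=> a0; rewrite /nu_int.
have hd : ((p%:Z) ^+ logn p `|a| %| a)%Z.
  by rewrite dvdzE abszX /= pfactor_dvdnn.
exists (a %/ (p%:Z) ^+ logn p `|a|)%Z; split; last by rewrite divzK.
apply/negP => hb.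
have : ((p%:Z) ^+ (logn p `|a|).+1 %| a)%Z.
  rewrite -[X in (_ %| X)%Z](divzK hd) exprSr mulrC.
  by apply: dvdz_mul => //; apply: dvdzz.
rewrite dvdzE abszX /= pfactor_dvdn ?absz_gt0 //; lia.
Qed.

Lemma sum3 (r : nat) (i j k : 'I_r) (f : 'I_r -> int) :
  i != j -> i != k -> j != k ->
  (forall m, m != i -> m != j -> m != k -> f m = 0) ->
  \sum_(m < r) f m = f i + f j + f k.
Proof.
move=> ij ik jk h.
rewrite (bigD1 i) //= (bigD1 j) //=; last by rewrite eq_sym.
rewrite (bigD1 k) //=; last by rewrite (eq_sym k) ik (eq_sym k) jk.
rewrite big1 ?addr0 ?addrA // => m hm.
apply: h; move: hm; rewrite -?andbA; case/and3P=> //.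

Qed.


Lemma dense_of_form (p r : nat) (Cf : ('I_r -> int) -> int)
  (E : int -> int -> int -> 'I_r -> int) (PV b1 b2 b3 : int) :
  prime p -> p != 3%N -> ~~ (p %| b1)%Z -> ~~ (p %| b2)%Z -> ~~ (p %| b3)%Z ->
  PV != 0 ->
  (forall x y z, Cf (E x y z) = PV * (b1 * x ^+ 3 + b2 * y ^+ 3 + b3 * z ^+ 3)) ->
  padic_dense p (ratio_set Cf).
Proof.
move=> pr p3 pb1 pb2 pb3 PV0 HC q n.
have b10 : b1 != 0 by apply: contraNneq pb1 => ->; apply: dvdz0.
have p0 : p%:Z != 0 by rewrite eqz_nat -lt0n prime_gt0.
have D0 : denq q != 0 := denq_neq0 q.
have eq : q = (numq q)%:~R / (denq q)%:~R by rewrite divq_num_den.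
move: D0 eq; move: (numq q) (denq q) => A D D0 eq.
pose T := p%:Z * (A * b1 * p%:Z ^+ 2 * D ^+ 2).
have pT : (p %| T)%Z by apply: dvdz_mulr; apply: dvdzz.
have [x0 [y0 [z0 [nz0 hz0]]]] := int_zero pr pb1 pb2 pb3.
have [x [y [z hx]]] := approx3_gen pr p3 (n + 3 + 3 * logn p `|D|)%N pb1 pb2 pb3 nz0 hz0 pT.
move: hx; set BB := b1 * x ^+ 3 + b2 * y ^+ 3 + b3 * z ^+ 3 => hx.
have CY0 : Cf (E (p%:Z * D) 0 0) != 0.
  rewrite HC expr0n /= !mulr0 !addr0 mulf_neq0 // mulf_neq0 // expf_neq0 // mulf_neq0 //.
exists ((Cf (E x y z))%:~R / (Cf (E (p%:Z * D) 0 0))%:~R); split.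
  by exists (E x y z), (E (p%:Z * D) 0 0).
rewrite !HC -/BB expr0n /= !mulr0 !addr0.
have e2 : (PV * BB)%:~R / (PV * (b1 * (p%:Z * D) ^+ 3))%:~R - q =
    (PV * (BB - T))%:~R / (PV * (b1 * (p%:Z * D) ^+ 3))%:~R :> rat.
  rewrite eq /T !intrM !intrB !intrM.
  by field; rewrite !intr_eq0 D0 b10 PV0 pnatr_eq0 -lt0n prime_gt0.
case: (eqVneq (BB - T) 0) => hBT.
  left; apply/eqP; rewrite -subr_eq0 e2 hBT mulr0 mul0r //.
right; rewrite e2 nu_rat_frac; last first.
- by rewrite !mulf_neq0 ?expf_neq0.
- by rewrite mulf_neq0.
have hL : ((n + 3 + 3 * logn p `|D|).+1 <= logn p `|BB - T|)%N.
  have aX k : `|(p%:Z) ^+ k|%N = (p ^ k)%N by rewrite abszX.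
  by rewrite -pfactor_dvdn ?absz_gt0 //; move: hx; rewrite dvdzE aX.
have lb1 : logn p `|b1| = 0%N.
  by apply: logn_coprime; rewrite prime_coprime // -dvdzE.
have pp : (0 < p)%N := prime_gt0 pr.
have hD : (0 < `|D|)%N by rewrite absz_gt0.
have hB : (0 < `|b1|)%N by rewrite absz_gt0.
have hPV : (0 < `|PV|)%N by rewrite absz_gt0.
have hBT' : (0 < `|BB - T|)%N by rewrite absz_gt0.
rewrite !abszM /= !lognM ?muln_gt0 ?pp ?hD ?hB ?hPV ?hBT' // (logn_prime p pr) eqxx lb1.
move: hL; move: (logn p `|PV|) (logn p `|D|) (logn p `|BB - T|) => u v w.
clear; lia.
Qed.


Lemma arith3 (v w M : nat) : (v <= M)%N -> (v %% 3 = w %% 3)%N ->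
  (v + (M - v %/ 3) * 3 = 3 * M + w %% 3)%N.
Proof. move=> h1 h2. rewrite -h2. have := divn_eq v 3. lia. Qed.

Theorem corollary1p6 (p : nat) (r : nat) (a : 'I_r -> int)
  (i j k : 'I_r) :
  prime p -> p != 3%N ->
  (i < j < k)%N ->
  a i * a j * a k != 0 ->
  nu_int p (a i) = nu_int p (a j) %[mod 3] ->
  nu_int p (a j) = nu_int p (a k) %[mod 3] ->
  padic_dense p (ratio_set (diag_cubic a)).
Proof.
move=> pr p3 hijk hnz h1 h2.
have ai0 : a i != 0 by move: hnz; rewrite !mulf_eq0 !negb_or => /andP[/andP[]].
have aj0 : a j != 0 by move: hnz; rewrite !mulf_eq0 !negb_or => /andP[/andP[]].
have ak0 : a k != 0 by move: hnz; rewrite !mulf_eq0 !negb_or => /andP[].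
have ij : i != j by apply/negP => /eqP e; move: hijk; rewrite e; lia.
have ik : i != k by apply/negP => /eqP e; move: hijk; rewrite e; lia.
have jk : j != k by apply/negP => /eqP e; move: hijk; rewrite e; lia.
have [b1 [pb1 ea1]] := unit_part pr ai0.
have [b2 [pb2 ea2]] := unit_part pr aj0.
have [b3 [pb3 ea3]] := unit_part pr ak0.
move: h1 h2 ea1 ea2 ea3.
move: (nu_int p (a i)) (nu_int p (a j)) (nu_int p (a k)) => vi vj vk h1 h2 ea1 ea2 ea3.
pose M := (vi + vj + vk)%N.
pose V := (3 * M + vi %% 3)%N.
pose ei := (M - vi %/ 3)%N.
pose ej := (M - vj %/ 3)%N.
pose ek := (M - vk %/ 3)%N.
have hei : (vi + ei * 3 = V)%N.
  by apply: arith3 => //; rewrite /M -addnA leq_addr.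
have hej : (vj + ej * 3 = V)%N.
  by apply: arith3; [rewrite /M addnAC leq_addl | rewrite h1].
have hek : (vk + ek * 3 = V)%N.
  by apply: arith3; [rewrite /M leq_addl | rewrite h1 h2].
have cexp (al b : int) (v e : nat) : al = b * (p%:Z) ^+ v -> (v + e * 3 = V)%N ->
    al * ((p%:Z) ^+ e) ^+ 3 = b * (p%:Z) ^+ V.
  by move=> -> <-; rewrite -exprM -mulrA -exprD.
have ci := cexp _ _ _ ei ea1 hei.
have cj := cexp _ _ _ ej ea2 hej.
have ck := cexp _ _ _ ek ea3 hek.
pose E (x y z : int) : 'I_r -> int := fun m =>
  if m == i then (p%:Z) ^+ ei * x else if m == j then (p%:Z) ^+ ej * y
  else if m == k then (p%:Z) ^+ ek * z else 0.
have EC x y z : diag_cubic a (E x y z) =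
    (p%:Z) ^+ V * (b1 * x ^+ 3 + b2 * y ^+ 3 + b3 * z ^+ 3).
  rewrite /diag_cubic (sum3 ij ik jk); last first.
    by move=> m mi mj mk; rewrite /E (negbTE mi) (negbTE mj) (negbTE mk) expr0n mulr0.
  rewrite /E eqxx (eq_sym j) (negbTE ij) eqxx (eq_sym k) (negbTE ik) (eq_sym k) (negbTE jk) eqxx.
  have ci' : a i * p%:Z ^+ ei * p%:Z ^+ ei * p%:Z ^+ ei = b1 * p%:Z ^+ V by rewrite -ci; ring.
  have cj' : a j * p%:Z ^+ ej * p%:Z ^+ ej * p%:Z ^+ ej = b2 * p%:Z ^+ V by rewrite -cj; ring.
  have ck' : a k * p%:Z ^+ ek * p%:Z ^+ ek * p%:Z ^+ ek = b3 * p%:Z ^+ V by rewrite -ck; ring.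
  rewrite !exprMn !mulrA ci' cj' ck'; ring.
apply: (dense_of_form pr p3 pb1 pb2 pb3 _ EC).
by rewrite expf_neq0 // eqz_nat -lt0n prime_gt0.
Qed.
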